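(* Let $n\ge1$, $d=2^n$. For all unitaries $U,V\in\mathcal{U}(d)$, $$|\mathcal{M}_{lin}(U)-\mathcal{M}_{lin}(V)|\le\frac{8d}{4+d}\,\|U-V\|_2,$$ where $\|\cdot\|_2$ is the Frobenius norm; in particular $\mathcal{M}_{lin}$ is Lipschitz on $\mathcal{U}(d)$ with a constant bounded independently of $d$.
   Context: $\mathcal{P}_n$ is the set of the $4^n$ $n$-qubit Pauli strings $\sigma_1\otimes\cdots\otimes\sigma_n$, $\sigma_i\in\{I,X,Y,Z\}$. For a pure state, $M_{lin}(|\psi\rangle)=1-d^{-1}\sum_{P\in\mathcal{P}_n}\langle\psi|P|\psi\rangle^4$. $\mathrm{STAB}$ is the finite set of $n$-qubit pure stabilizer states (states $C|0\rangle^{\otimes n}$ with $C$ a Clifford unitary, i.e. $CPC^\dagger\in\{\pm1,\pm i\}\mathcal{P}_n$ for all $P$). $\mathcal{M}_{lin}(U)=\frac{1}{|\mathrm{STAB}|}\sum_{|\psi\rangle\in\mathrm{STAB}}M_{lin}(U|\psi\rangle)$. *)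

(* Defs.v *)
From mathcomp Require Import all_boot all_algebra complex.
From mathcomp Require Import reals.
Set Implicit Arguments. Unset Strict Implicit. Unset Printing Implicit Defensive.
Import GRing.Theory Num.Theory.
Local Open Scope ring_scope.
Local Open Scope complex_scope.

Section QDefs.
Variable R : realType.
Local Notation C := R[i].

Definition adjmx m k (A : 'M[C]_(m, k)) : 'M[C]_(k, m) :=
  (map_mx (fun z : C => z^*) A)^T.

Definition unitary d (U : 'M[C]_d) : Prop := adjmx U *m U = 1%:M.

(* single-qubit Paulis indexed by 'I_4 : 0 = I, 1 = X, 2 = Y, 3 = Z *)
Definition pauli1 (a : 'I_4) : 'M[C]_2 :=
  \matrix_(i < 2, j < 2)
   match val a with
   | 0 => if i == j then 1 else 0
   | 1 => if i == j then 0 else 1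
   | 2 => if i == j then 0 else (if val i == 0 then - 'i else 'i)
   | _ => if i == j then (if val i == 0 then 1 else -1) else 0
   end.

(* k-th bit of a basis index of (C^2)^{\otimes n} *)
Definition qbit n (i : 'I_(2 ^ n)) (k : 'I_n) : 'I_2 :=
  inord (odd (i %/ 2 ^ k)).

(* Pauli string sigma_{s 0} (x) ... (x) sigma_{s (n-1)}, written entrywise:
   the (i,j) entry of a Kronecker product is the product of the entries. *)
Definition pauli n (s : {ffun 'I_n -> 'I_4}) : 'M[C]_(2 ^ n) :=
  \matrix_(i, j) \prod_(k < n) pauli1 (s k) (qbit i k) (qbit j k).

Definition clifford n (U : 'M[C]_(2 ^ n)) : Prop :=
  unitary U /\
  forall s : {ffun 'I_n -> 'I_4}, exists (t : {ffun 'I_n -> 'I_4}) (e : 'I_4),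
    U *m pauli s *m adjmx U = ('i ^+ e) *: pauli t.

Definition ket0 n : 'cV[C]_(2 ^ n) := \col_i (if val i == 0%N then 1 else 0).

Definition stab_state n (psi : 'cV[C]_(2 ^ n)) : Prop :=
  exists U, clifford U /\ psi = U *m ket0 n.

(* projector |psi><psi| : identifies state vectors up to global phase *)
Definition proj d (psi : 'cV[C]_d) : 'M[C]_d := psi *m adjmx psi.

Definition expect d (psi : 'cV[C]_d) (P : 'M[C]_d) : C :=
  (adjmx psi *m P *m psi) 0 0.

Definition Mlin n (psi : 'cV[C]_(2 ^ n)) : C :=
  1 - (2 ^ n)%:R^-1 * \sum_(s : {ffun 'I_n -> 'I_4}) expect psi (pauli s) ^+ 4.

Definition enum_STAB n (S : seq 'cV[C]_(2 ^ n)) : Prop :=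
  [/\ forall psi, psi \in S -> stab_state psi,
      forall phi, stab_state phi -> exists2 psi, psi \in S & proj phi = proj psi
    & uniq (map (@proj _) S)].

Definition MlinU n (S : seq 'cV[C]_(2 ^ n)) (U : 'M[C]_(2 ^ n)) : C :=
  (size S)%:R^-1 * \sum_(psi <- S) Mlin (U *m psi).

Definition frob m k (A : 'M[C]_(m, k)) : C :=
  sqrtC (\sum_i \sum_j `|A i j| ^+ 2).

End QDefs.

(* Main.v *)
Require Import Defs.
From mathcomp Require Import all_boot all_algebra complex.
From mathcomp Require Import reals.
From mathcomp Require Import order.
From mathcomp.algebra_tactics Require Import ring lra.
Set Implicit Arguments. Unset Strict Implicit. Unset Printing Implicit Defensive.
Import Order.TTheory GRing.Theory Num.Theory.
Local Open Scope ring_scope.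
Local Open Scope complex_scope.

Section RealPart.
Variable R : realFieldType.

Lemma sumsum (I : finType) (f g : I -> R) :
  \sum_i \sum_j f i * g j = (\sum_i f i) * (\sum_j g j).
Proof. by rewrite big_distrlr. Qed.

Lemma CS (I : finType) (u v : I -> R) :
  (\sum_i u i * v i) ^+ 2 <= (\sum_i u i ^+ 2) * (\sum_i v i ^+ 2).
Proof.
have H : \sum_i \sum_j (u i * v j - u j * v i) ^+ 2 =
   2 * ((\sum_i u i ^+ 2) * (\sum_i v i ^+ 2) - (\sum_i u i * v i) ^+ 2).
  have E1 : forall i j, (u i * v j - u j * v i) ^+ 2 =
     u i ^+ 2 * v j ^+ 2 + v i ^+ 2 * u j ^+ 2 - 2 * ((u i * v i) * (u j * v j)).
    by move=> i j; ring.
  under eq_bigr do under eq_bigr do rewrite E1.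
  under eq_bigr do rewrite big_split /= big_split /= sumrN -!mulr_sumr.
  rewrite big_split /= big_split /= sumrN -!mulr_suml -!mulr_sumr -!mulr_suml.
  rewrite -expr2; ring.
have : 0 <= \sum_i \sum_j (u i * v j - u j * v i) ^+ 2.
  by apply: sumr_ge0 => i _; apply: sumr_ge0 => j _; exact: sqr_ge0.
rewrite H; lra.
Qed.

Lemma core (I : finType) (s0 : I) (a b : I -> R) (d : R) :
  a s0 = 1 -> b s0 = 1 -> (forall s, a s ^+ 2 <= 1) -> (forall s, b s ^+ 2 <= 1) ->
  \sum_s a s ^+ 2 = d -> \sum_s b s ^+ 2 = d ->
  (\sum_s (a s ^+ 4 - b s ^+ 4)) ^+ 2 <= 4 * (d - 1) * \sum_s (a s - b s) ^+ 2.
Proof.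
move=> a0 b0 ha hb sa sb.
pose x s := a s - b s.
pose y s := if s == s0 then 0 else (a s + b s) * (a s ^+ 2 + b s ^+ 2 - 1).
have E : \sum_s (a s ^+ 4 - b s ^+ 4) = \sum_s x s * y s.
  have -> : \sum_s (a s ^+ 4 - b s ^+ 4) =
     \sum_s (x s * ((a s + b s) * (a s ^+ 2 + b s ^+ 2 - 1)) + (a s ^+ 2 - b s ^+ 2)).
    by apply: eq_bigr => s _; rewrite /x; ring.
  rewrite big_split /= sumrB sa sb subrr addr0.
  apply: eq_bigr => s _; rewrite /y; case: eqP => [->|_]; last by [].
  by rewrite /x a0 b0 !subrr !mul0r.
have Y : \sum_s y s ^+ 2 <= 4 * (d - 1).
  rewrite (bigD1 s0) //= /y eqxx expr0n /= add0r.
  have -> : 4 * (d - 1) = \sum_(s | s != s0) 2 * (a s ^+ 2 + b s ^+ 2).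
    rewrite -mulr_sumr big_split /=.
    move: sa sb; rewrite (bigD1 s0) //= (bigD1 s0 (F := fun s => b s ^+ 2)) //= a0 b0.
    rewrite expr1n => sa sb.
    have -> : \sum_(i | i != s0) a i ^+ 2 = d - 1 by rewrite -sa; ring.
    have -> : \sum_(i | i != s0) b i ^+ 2 = d - 1 by rewrite -sb; ring.
    ring.
  apply: ler_sum => s /negbTE ->.
  have h1 := ha s; have h2 := hb s.
  have h3 : 0 <= a s ^+ 2 := sqr_ge0 _.
  have h4 : 0 <= b s ^+ 2 := sqr_ge0 _.
  rewrite exprMn.
  have h5 : (a s + b s) ^+ 2 <= 2 * (a s ^+ 2 + b s ^+ 2).
    have := sqr_ge0 (a s - b s); rewrite -subr_ge0; move=> h; rewrite -subr_ge0.
    have -> : 2 * (a s ^+ 2 + b s ^+ 2) - (a s + b s) ^+ 2 = (a s - b s) ^+ 2 by ring.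
    exact: sqr_ge0.
  have h6 : (a s ^+ 2 + b s ^+ 2 - 1) ^+ 2 <= 1.
    set t := a s ^+ 2 + b s ^+ 2.
    have ht0 : 0 <= t by rewrite /t; lra.
    have ht2 : t <= 2 by rewrite /t; lra.
    nra.
  rewrite -[X in _ <= X]mulr1.
  apply: ler_pM => //; [exact: sqr_ge0 | exact: sqr_ge0].
rewrite E.
apply: (le_trans (CS x y)).
rewrite mulrC.
apply: ler_wpM2r; first by apply: sumr_ge0 => s _; exact: sqr_ge0.
exact: Y.
Qed.
Lemma final_real (R1 : rcfType) (d Dr S2 Fr : R1) : 1 <= d -> 0 <= Fr ->
  Dr ^+ 2 <= 4 * (d - 1) * S2 -> S2 <= 2 * d * Fr ->
  `|Dr| / d <= 8 * d / (4 + d) * Num.sqrt Fr.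
Proof.
move=> hd hF h1 h2.
set s := Num.sqrt Fr.
have hs : 0 <= s by exact: sqrtr_ge0.
have hFs : Fr = s ^+ 2 by rewrite sqr_sqrtr.
set t := `|Dr|.
have ht : 0 <= t by exact: normr_ge0.
have htD : t ^+ 2 = Dr ^+ 2 by rewrite /t real_normK ?num_real.
have key : t ^+ 2 <= 8 * (d - 1) * d * s ^+ 2.
  rewrite htD -hFs; apply: (le_trans h1).
  have : 0 <= 4 * (d - 1) by lra.
  move=> h0; have := ler_wpM2l h0 h2; move=> h3; apply: (le_trans h3); lra.
have hd0 : 0 < d by lra.
have h4d : 0 < 4 + d by lra.
rewrite ler_pdivrMr //.
have -> : 8 * d / (4 + d) * s * d = (8 * d ^+ 2 * s) / (4 + d) by ring.
rewrite ler_pdivlMr //.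
have poly : (d - 1) * (4 + d) ^+ 2 <= 8 * d ^+ 3.
  have hd1 : 0 <= d - 1 by lra.
  have h3 : 0 <= (d - 1) * (d - 1) * (d - 1) by apply: mulr_ge0 => //; apply: mulr_ge0.
  have h5 : 0 <= (4 * (d - 1) - 1) ^+ 2 by apply: sqr_ge0.
  have h6 : 0 <= (d - 1) ^+ 2 by apply: sqr_ge0.
  have -> : 8 * d ^+ 3 = 8 * d ^+ 3 - (d - 1) * (4 + d) ^+ 2 + (d - 1) * (4 + d) ^+ 2 by ring.
  rewrite lerDr.
  have -> : 8 * d ^+ 3 - (d - 1) * (4 + d) ^+ 2 =
    7 * ((d - 1) * (d - 1) * (d - 1)) + (4 * (d - 1) - 1) ^+ 2 / 8 + 12 * (d - 1) ^+ 2 + 63 / 8 by field.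
  lra.
rewrite -(ler_sqr (x := t * (4 + d))) ?nnegrE; last 2 first.
  - by apply: mulr_ge0 => //; lra.
  - by apply: mulr_ge0 => //; apply: mulr_ge0 => //; apply: mulr_ge0 => //; lra.
rewrite !exprMn.
apply: (le_trans (ler_wpM2r (sqr_ge0 (4 + d)) key)).
have hs2 : 0 <= s ^+ 2 by exact: sqr_ge0.
have : 0 <= 8 * d * s ^+ 2 by apply: mulr_ge0 => //; lra.
move=> h8; have := ler_wpM2l h8 poly.
move=> h9.
have -> : 8 * (d - 1) * d * s ^+ 2 * (4 + d) ^+ 2 = 8 * d * s ^+ 2 * ((d - 1) * (4 + d) ^+ 2) by ring.
apply: (le_trans h9).
have -> : 8 * d * s ^+ 2 * (8 * d ^+ 3) = 8 ^+ 2 * (d ^+ 2 * d ^+ 2) * s ^+ 2 by ring.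
by [].
Qed.

End RealPart.
Lemma bits_inj_nat n : forall i j, (i < 2 ^ n)%N -> (j < 2 ^ n)%N ->
  (forall k, (k < n)%N -> odd (i %/ 2 ^ k) = odd (j %/ 2 ^ k)) -> i = j.
Proof.
elim: n => [|n IH] i j hi hj h.
  by move: hi hj; rewrite expn0 !ltnS !leqn0 => /eqP -> /eqP ->.
have h0 := h 0%N isT; rewrite !expn0 !divn1 in h0.
have e : i./2 = j./2.
  apply: IH.
  - by rewrite -divn2 ltn_divLR // -expnSr.
  - by rewrite -divn2 ltn_divLR // -expnSr.
  move=> k hk; have := h k.+1 hk; by rewrite -!divn2 -!divnMA -expnS.
by rewrite -(odd_double_half i) -(odd_double_half j) h0 e.
Qed.

Lemma qbit_val n (i : 'I_(2 ^ n)) k : val (qbit i k) = odd (i %/ 2 ^ k).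
Proof. by rewrite /qbit; apply: inordK; rewrite ltnS leq_b1. Qed.

Lemma qbit_inj n (i j : 'I_(2 ^ n)) : (forall k, qbit i k = qbit j k) -> i = j.
Proof.
move=> h; apply: val_inj; apply: (@bits_inj_nat n) => [||k hk]; rewrite ?ltn_ord //.
have := h (Ordinal hk) => /(congr1 val); rewrite !qbit_val.
by case: odd; case: odd.
Qed.

Definition bitsf n (i : 'I_(2 ^ n)) : {ffun 'I_n -> 'I_2} := [ffun k => qbit i k].

Lemma bitsf_bij n : bijective (@bitsf n).
Proof.
apply: inj_card_bij.
  by move=> i j /ffunP h; apply: qbit_inj => k; have := h k; rewrite !ffunE.
by rewrite card_ffun !card_ord.
Qed.

Lemma sum_bits n (T : nmodType) (G : {ffun 'I_n -> 'I_2} -> T) :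
  \sum_(l : 'I_(2 ^ n)) G (bitsf l) = \sum_b G b.
Proof. by rewrite (reindex (@bitsf n)) //; apply: onW_bij; exact: bitsf_bij. Qed.
Section S.
Variable R : realType.
Local Notation C := R[i].
Local Notation "x ^c" := (@conjc _ x) (at level 1, format "x ^c").

Lemma conjci : ('i : C)^c = - 'i.
Proof. by apply/eqP; rewrite eq_complex /= oppr0 !eqxx. Qed.

Lemma ii : ('i : C) * 'i = -1.
Proof. by rewrite -expr2 sqr_i. Qed.

Ltac cases4 a := case: a => [[|[|[|[|?]]]] ?] //=.
Ltac cases2 a := case: a => [[|[|?]] ?] //=.

Lemma pauli1_herm (a : 'I_4) (x y : 'I_2) : (pauli1 R a x y)^c = pauli1 R a y x.
Proof.
rewrite !mxE; cases4 a; cases2 x; cases2 y;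
  by apply/eqP; rewrite eq_complex /= ?oppr0 ?opprK ?eqxx.
Qed.

Ltac cfin := apply/eqP; rewrite eq_complex /=; apply/andP; split; apply/eqP; ring.

Lemma pauli1_sq (a : 'I_4) : pauli1 R a *m pauli1 R a = 1%:M.
Proof.
apply/matrixP => x y; rewrite !mxE !big_ord_recr big_ord0 /= !mxE.
cases4 a; cases2 x; cases2 y; cfin.
Qed.

Lemma pauli1_compl (x y z w : 'I_2) :
  \sum_(a < 4) pauli1 R a x y * (pauli1 R a z w)^c = 2 * ((x == z) && (y == w))%:R.
Proof.
rewrite !big_ord_recr big_ord0 /= !mxE /=.
cases2 x; cases2 y; cases2 z; cases2 w; cfin.
Qed.

Lemma pauli1_0 : pauli1 R 0 = 1%:M.
Proof. by apply/matrixP => x y; rewrite !mxE /=; case: eqP. Qed.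

Definition kron n (A : 'I_n -> 'M[C]_2) : 'M[C]_(2 ^ n) :=
  \matrix_(i, j) \prod_k A k (qbit i k) (qbit j k).

Lemma pauli_kron n (s : {ffun 'I_n -> 'I_4}) : pauli R s = kron (fun k => pauli1 R (s k)).
Proof. by []. Qed.

Lemma eq_kron n (A B : 'I_n -> 'M[C]_2) : (forall k, A k = B k) -> kron A = kron B.
Proof. by move=> h; apply/matrixP => i j; rewrite !mxE; apply: eq_bigr => k _; rewrite h. Qed.

Lemma kronM n (A B : 'I_n -> 'M[C]_2) :
  kron A *m kron B = kron (fun k => A k *m B k).
Proof.
apply/matrixP => i j; rewrite /kron !mxE.
pose G (b : {ffun 'I_n -> 'I_2}) := \prod_k (A k (qbit i k) (b k) * B k (b k) (qbit j k)).
rewrite (eq_bigr (fun l => G (bitsf l))); last first.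
  move=> l _; rewrite !mxE /G -big_split /=.
  by apply: eq_bigr => k _; rewrite !ffunE.
rewrite sum_bits /G -(bigA_distr_bigA (fun k c => A k (qbit i k) c * B k c (qbit j k))) /=.
by apply: eq_bigr => k _; rewrite mxE.
Qed.

Lemma prod_qbit_eq n (i j : 'I_(2 ^ n)) :
  \prod_k ((qbit i k == qbit j k)%:R : C) = (i == j)%:R.
Proof.
case: (eqVneq i j) => [->|ne]; first by rewrite big1 // => k _; rewrite eqxx.
have : ~~ [forall k, qbit i k == qbit j k].
  apply/negP => /forallP h; move: ne.
  by rewrite (qbit_inj (fun k => eqP (h k))) eqxx.
rewrite negb_forall => /existsP [k hk].
by rewrite (bigD1 k) //= (negbTE hk) mul0r.
Qed.

Lemma kron1 n : kron (fun _ : 'I_n => 1%:M) = 1%:M :> 'M[C]_(2 ^ n).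
Proof.
apply/matrixP => i j; rewrite /kron !mxE -prod_qbit_eq.
by apply: eq_bigr => k _; rewrite mxE.
Qed.

Lemma pauli_sq n (s : {ffun 'I_n -> 'I_4}) : pauli R s *m pauli R s = 1%:M.
Proof.
rewrite pauli_kron kronM -(@kron1 n); apply: eq_kron => k.
exact: pauli1_sq.
Qed.

Lemma pauli_herm n (s : {ffun 'I_n -> 'I_4}) i j : (pauli R s i j)^c = pauli R s j i.
Proof.
rewrite !mxE rmorph_prod; apply: eq_bigr => k _; exact: pauli1_herm.
Qed.

Lemma pauli_0 n : pauli R [ffun _ : 'I_n => 0] = 1%:M.
Proof.
rewrite pauli_kron -(@kron1 n); apply: eq_kron => k.
by rewrite ffunE pauli1_0.
Qed.

Lemma pauli_compl n (i j k l : 'I_(2 ^ n)) :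
  \sum_(s : {ffun 'I_n -> 'I_4}) pauli R s i j * (pauli R s k l)^c =
  (2 ^ n)%:R * ((i == k) && (j == l))%:R.
Proof.
under eq_bigr => s _ do rewrite !mxE rmorph_prod -big_split /=.
rewrite -(bigA_distr_bigA (fun q a => pauli1 R a (qbit i q) (qbit j q) *
              (pauli1 R a (qbit k q) (qbit l q))^c)) /=.
under eq_bigr => q _ do rewrite pauli1_compl.
rewrite big_split /= prodr_const card_ord natrX.
congr (_ * _).
rewrite -mulnb natrM -!prod_qbit_eq -big_split /=.
by apply: eq_bigr => q _; rewrite -natrM mulnb.
Qed.

Lemma adjmx_mul m k l (A : 'M[C]_(m, k)) (B : 'M[C]_(k, l)) :
  adjmx (A *m B) = adjmx B *m adjmx A.
Proof. by rewrite /adjmx map_mxM trmx_mul. Qed.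

Definition nrm d (v : 'cV[C]_d) := \sum_i (v i 0)^c * v i 0.

Lemma nrm_adj d (v : 'cV[C]_d) : (adjmx v *m v) 0 0 = nrm v.
Proof. by rewrite !mxE; apply: eq_bigr => i _; rewrite !mxE. Qed.

Lemma nrm_ge0 d (v : 'cV[C]_d) : 0 <= nrm v.
Proof. by apply: sumr_ge0 => i _; rewrite mulrC; exact: mulcJ_ge0. Qed.

Lemma nrm_unitary d (U : 'M[C]_d) v : unitary U -> nrm (U *m v) = nrm v.
Proof.
by move=> hU; rewrite -!nrm_adj adjmx_mul -mulmxA (mulmxA (adjmx U)) hU mul1mx.
Qed.

Lemma expectE d (v : 'cV[C]_d) P :
  expect v P = \sum_(p : 'I_d * 'I_d) P p.1 p.2 * ((v p.1 0)^c * v p.2 0).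
Proof.
rewrite /expect mxE -(pair_bigA _ (fun i j => P i j * ((v i 0)^c * v j 0))) /= exchange_big /=; apply: eq_bigr => j _.
rewrite mxE mulr_suml; apply: eq_bigr => i _; rewrite !mxE; ring.
Qed.

Lemma ket0_nrm n : nrm (ket0 R n) = 1.
Proof.
have h0 : (0 < 2 ^ n)%N by rewrite expn_gt0.
rewrite /nrm (bigD1 (Ordinal h0)) //= big1 ?addr0.
  by rewrite !mxE /= mulr1; apply/eqP; rewrite eq_complex /= oppr0 !eqxx.
move=> i hi; rewrite !mxE; case: eqP; last by rewrite mulr0.
by move=> e; move: hi; have -> : i = Ordinal h0 by apply: val_inj. 
Qed.

Lemma stab_nrm n (psi : 'cV[C]_(2 ^ n)) : stab_state psi -> nrm psi = 1.
Proof. by case=> Cl [[hu _] ->]; rewrite nrm_unitary // ket0_nrm. Qed.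

Lemma adjmxK m k (A : 'M[C]_(m, k)) : adjmx (adjmx A) = A.
Proof. by apply/matrixP => i j; rewrite !mxE conjcK. Qed.

Lemma adjmxD m k (A B : 'M[C]_(m, k)) : adjmx (A + B) = adjmx A + adjmx B.
Proof. by apply/matrixP => i j; rewrite !mxE rmorphD. Qed.

Lemma adjmxN m k (A : 'M[C]_(m, k)) : adjmx (- A) = - adjmx A.
Proof. by apply/matrixP => i j; rewrite !mxE rmorphN. Qed.

Lemma adjmx1 m : adjmx (1%:M : 'M[C]_m) = 1%:M.
Proof.
apply/matrixP => i j; rewrite !mxE eq_sym.
by case: eqP => _; rewrite ?mulr1n ?mulr0n ?conjc1 ?conjc0.
Qed.

Lemma adjmx_pauli n (s : {ffun 'I_n -> 'I_4}) : adjmx (pauli R s) = pauli R s.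
Proof. by apply/matrixP => i j; rewrite [LHS]mxE mxE pauli_herm. Qed.

Lemma expect_conj d (v : 'cV[C]_d) P : adjmx P = P -> (expect v P)^c = expect v P.
Proof.
move=> hP; rewrite /expect.
have -> : ((adjmx v *m P *m v) 0 0)^c = (adjmx (adjmx v *m P *m v)) 0 0 by rewrite !mxE.
by rewrite !adjmx_mul adjmxK hP mulmxA.
Qed.

Lemma expect_real d (v : 'cV[C]_d) P : adjmx P = P -> expect v P = (complex.Re (expect v P))%:C.
Proof.
move=> hP; rewrite ReJ_add expect_conj //.
by rewrite -mulr2n; field.
Qed.

Lemma expectD d (v : 'cV[C]_d) P Q : expect v (P + Q) = expect v P + expect v Q.
Proof. by rewrite /expect mulmxDr mulmxDl mxE. Qed.

Lemma expectN d (v : 'cV[C]_d) P : expect v (- P) = - expect v P.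
Proof. by rewrite /expect mulmxN mulNmx mxE. Qed.

Lemma herm_inv_bound d (v : 'cV[C]_d) P : adjmx P = P -> P *m P = 1%:M ->
  nrm v = 1 -> 0 <= 1 + expect v P.
Proof.
move=> hP hPP hv.
set Q := 1%:M + P.
have hQ : adjmx Q = Q by rewrite adjmxD adjmx1 hP.
have hQQ : Q *m Q = Q + Q.
  by rewrite /Q mulmxDl !mulmxDr !mul1mx mulmx1 hPP [P + _]addrC.
have e1 : expect v Q = 1 + expect v P.
  by rewrite expectD /expect mulmx1 nrm_adj hv.
have e2 : nrm (Q *m v) = (1 + expect v P) *+ 2.
  rewrite -nrm_adj adjmx_mul hQ -e1 /expect -mulmxA (mulmxA Q) hQQ.
  by rewrite mulmxDl mulmxDr mxE mulr2n mulmxA.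
have := nrm_ge0 (Q *m v); rewrite e2 pmulrn_lge0 //.
Qed.

Definition Tx n (s : {ffun 'I_n -> 'I_4}) (X : 'I_(2 ^ n) * 'I_(2 ^ n) -> C) :=
  \sum_p pauli R s p.1 p.2 * X p.

Lemma compl_sum n (X : 'I_(2 ^ n) * 'I_(2 ^ n) -> C) :
  \sum_s Tx s X * (Tx s X)^c = (2 ^ n)%:R * \sum_p X p * (X p)^c.
Proof.
rewrite /Tx.
under eq_bigr => s _ do rewrite rmorph_sum big_distrlr /=.
rewrite exchange_big /=; rewrite mulr_sumr; apply: eq_bigr => p _.
rewrite exchange_big /=.
rewrite (bigD1 p) //= [X in _ + X]big1 ?addr0; last first.
  move=> q hq.
  rewrite (eq_bigr (fun s => (X p * (X q)^c) * (pauli R s p.1 p.2 * (pauli R s q.1 q.2)^c))).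
    rewrite -mulr_sumr pauli_compl.
    have -> : ((p.1 == q.1) && (p.2 == q.2)) = false.
      apply/negbTE; move: hq; apply: contra => /andP [/eqP e1 /eqP e2].
      by apply/eqP; move: e1 e2; case: p => [? ?]; case: q => [? ?] /= -> ->.
    by rewrite !mulr0.
  by move=> s _; rewrite rmorphM; ring.
rewrite (eq_bigr (fun s => (X p * (X p)^c) * (pauli R s p.1 p.2 * (pauli R s p.1 p.2)^c))).
  by rewrite -mulr_sumr pauli_compl !eqxx mulr1 mulrC.
by move=> s _; rewrite rmorphM; ring.
Qed.

Lemma conjcM (x y : C) : (x * y)^c = x^c * y^c.
Proof.
case: x => a b; case: y => c d; apply/eqP; rewrite eq_complex /=.
by apply/andP; split; apply/eqP; ring.
Qed.

Definition Xv d (v : 'cV[C]_d) (p : 'I_d * 'I_d) := (v p.1 0)^c * v p.2 0.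

Lemma expectT n (v : 'cV[C]_(2 ^ n)) s : expect v (pauli R s) = Tx s (Xv v).
Proof. by rewrite expectE. Qed.

Lemma sumXv d (v : 'cV[C]_d) : \sum_p Xv v p * (Xv v p)^c = nrm v ^+ 2.
Proof.
rewrite /Xv expr2 /nrm big_distrlr /= pair_bigA /=.
by apply: eq_bigr => p _; rewrite conjcM conjcK; ring.
Qed.

Lemma cadd (x y : R) : (x + y)%:C = x%:C + y%:C :> C.
Proof. by apply/eqP; rewrite eq_complex /= addr0 !eqxx. Qed.

Lemma csum (I : finType) (f : I -> R) : (\sum_i f i)%:C = \sum_i (f i)%:C :> C.
Proof.
elim/big_rec2: _ => [|i x y _ <-]; first by [].
by rewrite cadd.
Qed.

Lemma csub (x y : R) : (x - y)%:C = x%:C - y%:C :> C.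
Proof. by apply/eqP; rewrite eq_complex /= oppr0 addr0 !eqxx. Qed.

Lemma cnat k : (k%:R : R)%:C = k%:R :> C.
Proof. by elim: k => // k IH; rewrite -addn1 !natrD cadd IH. Qed.

Definition alpha n (v : 'cV[C]_(2 ^ n)) (s : {ffun 'I_n -> 'I_4}) : R :=
  complex.Re (expect v (pauli R s)).

Lemma alphaE n (v : 'cV[C]_(2 ^ n)) s : expect v (pauli R s) = (alpha v s)%:C.
Proof. by rewrite /alpha -expect_real // adjmx_pauli. Qed.

Lemma alpha_bound n (v : 'cV[C]_(2 ^ n)) s : nrm v = 1 -> alpha v s ^+ 2 <= 1.
Proof.
move=> hv.
have h1 := herm_inv_bound (adjmx_pauli s) (pauli_sq s) hv.
have h2 : 0 <= 1 + expect v (- pauli R s).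
  apply: herm_inv_bound hv; first by rewrite adjmxN adjmx_pauli.
  by rewrite mulNmx mulmxN opprK pauli_sq.
rewrite expectN alphaE in h2; rewrite alphaE in h1.
have e1 : (1 : C) + (alpha v s)%:C = (1 + alpha v s)%:C by rewrite rmorphD rmorph1.
have e2 : (1 : C) - (alpha v s)%:C = (1 - alpha v s)%:C by rewrite rmorphB rmorph1.
rewrite e1 ler0c in h1; rewrite e2 ler0c in h2.
nra.
Qed.

Lemma alpha0 n (v : 'cV[C]_(2 ^ n)) : nrm v = 1 -> alpha v [ffun => 0] = 1.
Proof.
by move=> hv; rewrite /alpha pauli_0 /expect mulmx1 nrm_adj hv.
Qed.

Lemma TxB n s (X Y : 'I_(2 ^ n) * 'I_(2 ^ n) -> C) :
  Tx s (fun p => X p - Y p) = Tx s X - Tx s Y.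
Proof. by rewrite /Tx -sumrB; apply: eq_bigr => p _; ring. Qed.

Lemma realsq (x : R) : (x%:C) * (x%:C)^c = (x ^+ 2)%:C.
Proof. by rewrite conjc_real -rmorphM expr2. Qed.

Lemma alpha_sum n (v : 'cV[C]_(2 ^ n)) : nrm v = 1 ->
  \sum_s alpha v s ^+ 2 = (2 ^ n)%:R.
Proof.
move=> hv; apply: complexI.
rewrite csum cnat.
under eq_bigr => s _ do rewrite -realsq -alphaE expectT.
by rewrite compl_sum sumXv hv expr1n mulr1.
Qed.

Lemma alpha_diff n (v w : 'cV[C]_(2 ^ n)) :
  (\sum_s (alpha v s - alpha w s) ^+ 2)%:C =
  (2 ^ n)%:R * \sum_p (Xv v p - Xv w p) * (Xv v p - Xv w p)^c.
Proof.
rewrite csum.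
under eq_bigr => s _ do rewrite -realsq csub -!alphaE !expectT -TxB.
by rewrite compl_sum.
Qed.

Lemma conjcD (x y : C) : (x + y)^c = x^c + y^c.
Proof. by case: x => a b; case: y => c d; apply/eqP; rewrite eq_complex /= opprD !eqxx. Qed.

Lemma conjcB (x y : C) : (x - y)^c = x^c - y^c.
Proof. by case: x => a b; case: y => c d; apply/eqP; rewrite eq_complex /= !opprD !eqxx. Qed.

Lemma conjc_sum (I : finType) (f : I -> C) : (\sum_i f i)^c = \sum_i (f i)^c.
Proof.
elim/big_rec2: _ => [|i x y _ <-]; last by rewrite conjcD.
by apply/eqP; rewrite eq_complex /= oppr0 !eqxx.
Qed.

Definition ip d (v w : 'cV[C]_d) := \sum_i (v i 0)^c * w i 0.

Lemma ip_conj d (v w : 'cV[C]_d) : (ip v w)^c = ip w v.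
Proof. by rewrite conjc_sum; apply: eq_bigr => i _; rewrite conjcM conjcK mulrC. Qed.

Lemma cross d (v w : 'cV[C]_d) :
  \sum_p Xv v p * (Xv w p)^c = ip v w * ip w v.
Proof.
rewrite /ip big_distrlr /= pair_bigA /=; apply: eq_bigr => p _.
by rewrite /Xv !conjcM conjcK; ring.
Qed.

Lemma E_bound d (v w : 'cV[C]_d) : nrm v = 1 -> nrm w = 1 ->
  \sum_p (Xv v p - Xv w p) * (Xv v p - Xv w p)^c <= 2 * nrm (v - w).
Proof.
move=> hv hw.
have e1 : \sum_p (Xv v p - Xv w p) * (Xv v p - Xv w p)^c =
   \sum_p Xv v p * (Xv v p)^c + \sum_p Xv w p * (Xv w p)^c
   - \sum_p Xv v p * (Xv w p)^c - \sum_p Xv w p * (Xv v p)^c.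
  rewrite (eq_bigr (fun p => ((Xv v p * (Xv v p)^c + Xv w p * (Xv w p)^c)
     - Xv v p * (Xv w p)^c) - Xv w p * (Xv v p)^c)); last by move=> p _; rewrite conjcB; ring.
  by rewrite !sumrB big_split.
have e2 : nrm (v - w) = nrm v + nrm w - ip v w - ip w v.
  rewrite /nrm /ip (eq_bigr (fun i => (((v i 0)^c * v i 0 + (w i 0)^c * w i 0)
     - (v i 0)^c * w i 0) - (w i 0)^c * v i 0)); last by move=> i _; rewrite !mxE conjcB; ring.
  by rewrite !sumrB big_split.
have nv : ip v v = 1 by rewrite -hv.
have nw : ip w w = 1 by rewrite -hw.
rewrite e1 e2 !cross nv nw hv hw -(ip_conj w v) -subr_ge0.
set z := ip w v.
have c1 : (1 : C)^c = 1 by apply/eqP; rewrite eq_complex /= oppr0 !eqxx.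
have -> : 2 * (1 + 1 - z^c - z) - (1 * 1 + 1 * 1 - z^c * z - z * z^c) =
          2 * ((1 - z) * (1 - z)^c) by rewrite conjcB c1; ring.
by rewrite mulr_ge0 ?ler0n // mulcJ_ge0.
Qed.

Lemma cmul (x y : R) : (x * y)%:C = x%:C * y%:C :> C.
Proof. by apply/eqP; rewrite eq_complex /= !mulr0 !mul0r subr0 addr0 !eqxx. Qed.

Lemma normsq (x : C) : x^c * x = `|x| ^+ 2.
Proof.
rewrite -add_Re2_Im2; case: x => a b /=; apply/eqP; rewrite eq_complex /=.
by apply/andP; split; apply/eqP; ring.
Qed.

Lemma CS_C (I : finType) (u v : I -> C) :
  (\sum_i `|u i| * `|v i|) ^+ 2 <= (\sum_i `|u i| ^+ 2) * (\sum_i `|v i| ^+ 2).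
Proof.
pose nr (x : C) := Num.sqrt (complex.Re x ^+ 2 + complex.Im x ^+ 2).
have hn : forall x : C, `|x| = (nr x)%:C by move=> x; rewrite normc_def.
under eq_bigr do rewrite !hn -cmul.
under [X in _ <= X * _]eq_bigr do rewrite hn expr2 -cmul -expr2.
under [X in _ <= _ * X]eq_bigr do rewrite hn expr2 -cmul -expr2.
rewrite -!csum expr2 -!cmul lecR -expr2.
exact: CS.
Qed.

Lemma nrm_mul_bound d (A : 'M[C]_d) (v : 'cV[C]_d) :
  nrm (A *m v) <= (\sum_i \sum_j `|A i j| ^+ 2) * nrm v.
Proof.
rewrite /nrm; under eq_bigr do rewrite normsq.
under [X in _ <= _ * X]eq_bigr do rewrite normsq.
rewrite mulr_suml; apply: ler_sum => i _.
rewrite mxE.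
apply: le_trans (CS_C (fun j => A i j) (fun j => v j 0)).
rewrite ler_sqr ?nnegrE ?normr_ge0 //; last by apply: sumr_ge0 => j _; rewrite mulr_ge0.
apply: le_trans (ler_norm_sum _ _ _) _.
by apply: ler_sum => j _; rewrite normrM.
Qed.

Lemma cexp (x : R) k : (x ^+ k)%:C = x%:C ^+ k :> C.
Proof. by elim: k => // k IH; rewrite !exprS cmul IH. Qed.

Lemma cinv (x : R) : (x^-1)%:C = (x%:C)^-1 :> C.
Proof.
have [->|hx] := eqVneq x 0; first by rewrite invr0; apply/esym/invr0.
apply: (@mulfI _ x%:C); first by apply/negP => /eqP [] /eqP; rewrite (negbTE hx).
by rewrite -cmul !divff // ?(negbTE hx) //; apply/negP => /eqP [] /eqP; rewrite (negbTE hx).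
Qed.

Lemma cnorm (x : R) : `|x%:C| = `|x|%:C :> C.
Proof. by rewrite normc_def /= expr0n /= addr0 sqrtr_sqr. Qed.

Lemma per_state n (psi : 'cV[C]_(2 ^ n)) (U V : 'M[C]_(2 ^ n)) :
  nrm psi = 1 -> unitary U -> unitary V ->
  `|Mlin (U *m psi) - Mlin (V *m psi)|
    <= (8 * (2 ^ n)%:R / (4 + (2 ^ n)%:R)) * frob (U - V).
Proof.
move=> hpsi hU hV.
set phi := U *m psi; set chi := V *m psi.
have hphi : nrm phi = 1 by rewrite /phi nrm_unitary.
have hchi : nrm chi = 1 by rewrite /chi nrm_unitary.
set d : R := (2 ^ n)%:R.
set Dr := \sum_s (alpha phi s ^+ 4 - alpha chi s ^+ 4).
set S2 := \sum_s (alpha phi s - alpha chi s) ^+ 2.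
pose nr (x : C) := Num.sqrt (complex.Re x ^+ 2 + complex.Im x ^+ 2).
have hn : forall x : C, `|x| = (nr x)%:C by move=> x; rewrite normc_def.
set Fr := \sum_i \sum_j nr ((U - V) i j) ^+ 2.
have hF : \sum_i \sum_j `|(U - V) i j| ^+ 2 = Fr%:C.
  rewrite csum; apply: eq_bigr => i _; rewrite csum; apply: eq_bigr => j _.
  by rewrite hn cexp.
have hFr : 0 <= Fr by apply: sumr_ge0 => i _; apply: sumr_ge0 => j _; exact: sqr_ge0.
have hd : 1 <= d by rewrite /d ler1n expn_gt0.
have eM : Mlin (U *m psi) - Mlin (V *m psi) = - ((d^-1 * Dr)%:C).
  rewrite /Mlin -/phi -/chi.
  under eq_bigr do rewrite alphaE -cexp.
  under [X in _ - (_ - _ * X)]eq_bigr do rewrite alphaE -cexp.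
  rewrite -!csum /Dr sumrB cmul csub cinv /d cnat; ring.
rewrite eM normrN cnorm.
have eF : frob (U - V) = (Num.sqrt Fr)%:C.
  rewrite /frob hF.
  have -> : Fr%:C = ((Num.sqrt Fr)%:C) ^+ 2 :> C by rewrite -cexp sqr_sqrtr.
  by rewrite sqrCK // ler0c sqrtr_ge0.
have eK : (8 * (2 ^ n)%:R / (4 + (2 ^ n)%:R) : C) = (8 * d / (4 + d))%:C.
  by rewrite cmul cinv cadd cmul /d !cnat.
rewrite eF eK -cmul lecR.
rewrite normrM ger0_norm ?invr_ge0 ?ler0n //.
rewrite mulrC.
apply: (@final_real _ d Dr S2 Fr) => //.
- apply: (core (s0 := [ffun => 0])).
  + exact: alpha0.
  + exact: alpha0.
  + by move=> s; exact: alpha_bound.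
  + by move=> s; exact: alpha_bound.
  + exact: alpha_sum.
  + exact: alpha_sum.
- rewrite -lecR.
  have -> : (2 * d * Fr)%:C = d%:C * (2 * Fr%:C) :> C by rewrite !cmul; ring.
  rewrite alpha_diff /d cnat.
  apply: ler_wpM2l; first exact: ler0n.
  apply: (le_trans (E_bound hphi hchi)).
  apply: ler_wpM2l; first exact: ler0n.
  have -> : phi - chi = (U - V) *m psi by rewrite mulmxBl.
  by rewrite -hF -[X in _ <= X]mulr1 -hpsi; exact: nrm_mul_bound.
Qed.

Lemma seq_bound (T : eqType) (S : seq T) (f : T -> C) (K : C) :
  (forall x, x \in S -> `|f x| <= K) -> `|\sum_(x <- S) f x| <= K *+ size S.
Proof.
elim: S => [|x S IH] h; first by rewrite big_nil normr0.
rewrite big_cons /= mulrS; apply: (le_trans (ler_normD _ _)).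
apply: lerD; first by apply: h; rewrite mem_head.
by apply: IH => y hy; apply: h; rewrite in_cons hy orbT.
Qed.
End S.

Unset Implicit Arguments.

Theorem mainTheorem10 (R : realType) (n : nat) (S : seq 'cV[R[i]]_(2 ^ n))
  (U V : 'M[R[i]]_(2 ^ n)) :
  (1 <= n)%N -> enum_STAB S -> unitary U -> unitary V ->
  `|MlinU S U - MlinU S V|
    <= (8 * (2 ^ n)%:R / (4 + (2 ^ n)%:R)) * frob (U - V).
Proof.
move=> _ [hS _ _] hU hV.
set K := _ * frob (U - V).
have hK : 0 <= K.
  apply: mulr_ge0; last by rewrite /frob sqrtC_ge0; apply: sumr_ge0 => i _;
    apply: sumr_ge0 => j _; exact: exprn_ge0.
  by apply: divr_ge0; [apply: mulr_ge0 | apply: addr_ge0]; exact: ler0n.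
rewrite /MlinU -mulrBr -sumrB normrM.
have hb : `|\sum_(psi <- S) (Mlin (U *m psi) - Mlin (V *m psi))| <= K *+ size S.
  apply: seq_bound => psi hpsi.
  by apply: per_state => //; apply: stab_nrm; apply: hS.
case: (size S) hb => [|m] hb.
  by rewrite invr0 normr0 mul0r.
rewrite ger0_norm ?invr_ge0 ?ler0n //.
apply: (le_trans (ler_wpM2l _ hb)); first by rewrite invr_ge0 ler0n.
by rewrite -[K *+ _]mulr_natl mulrA mulVf ?mul1r // pnatr_eq0.
Qed.
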